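(* Let $\Omega\subset\mathbb{C}$ be a Carathéodory domain and $\varphi$ a subharmonic function on $\mathbb{C}$. Suppose $P$ is a holomorphic polynomial with $\int_\Omega|P|^2e^{-\varphi}d\lambda<\infty$. Let $p\in\partial\Omega$ and let $\Delta\subset\mathbb{C}\setminus\Omega$ be a disc with $p\in\partial\Delta$. Then for every $\varepsilon>0$ there is a function $\widetilde P$ holomorphic on a neighborhood of $\overline{\Omega}$ with $\widetilde P(p)=0$ and $\int_\Omega|\widetilde P-P|^2e^{-\varphi}d\lambda<\varepsilon$.
   Context: A Carathéodory domain is a simply-connected bounded domain $\Omega\subset\mathbb{C}$ whose boundary is also the boundary of an unbounded domain. $d\lambda$ is Lebesgue measure. *)

(* Defs.v *)
From HB Require Import structures.
From mathcomp Require Import all_boot all_order all_algebra.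
From mathcomp Require Import all_classical all_reals all_analysis.
From mathcomp Require Import complex.
Set Implicit Arguments. Unset Strict Implicit. Unset Printing Implicit Defensive.
Import Order.TTheory GRing.Theory Num.Theory numFieldNormedType.Exports.
Import ComplexField Normc.
Local Open Scope classical_set_scope.
Local Open Scope ring_scope.
Local Open Scope complex_scope.

Section Defs.
Variable R : realType.

Notation C := (R[i])^o.

Definition boundary (A : set C) : set C := closure A `&` closure (~` A).

Definition domain (A : set C) : Prop := A !=set0 /\ open A /\ connected A.

Definition simply_connected (A : set C) : Prop :=
  connected A /\
  forall g : R -> C,
    {within `[0, 1]%classic, continuous g} ->
    (forall t, `[0, 1]%classic t -> A (g t)) ->
    g 0 = g 1 ->
    exists H : R * R -> C,
      {within (`[0, 1]%classic `*` `[0, 1]%classic), continuous H} /\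
      (forall s t, `[0, 1]%classic s -> `[0, 1]%classic t -> A (H (s, t))) /\
      (forall t, `[0, 1]%classic t -> H (0, t) = g t /\ H (1, t) = g 0) /\
      (forall s, `[0, 1]%classic s -> H (s, 0) = g 0 /\ H (s, 1) = g 0).

Definition caratheodory_domain (Om : set C) : Prop :=
  domain Om /\ simply_connected Om /\ bounded_set Om /\
  exists U : set C, domain U /\ ~ bounded_set U /\ boundary U = boundary Om.

Definition disc (c : C) (r : R) : set C := [set z | normc (z - c) < r].

Definition holomorphic_on (U : set C) (f : C -> C) : Prop :=
  open U /\ forall z, U z -> derivable f z 1.

Definition usc (f : C -> \bar R) : Prop :=
  forall z (c : R), (f z < c%:E)%E -> \forall w \near z, (f w < c%:E)%E.

Definition subharmonic (phi : C -> \bar R) : Prop :=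
  (forall z, (phi z < +oo)%E) /\ usc phi /\
  forall (z : C) (r : R), 0 < r ->
    (phi z <= ((2 * pi)^-1)%R%:E *
       \int[@lebesgue_measure R]_(t in `[0%R, (2 * pi)%R]%classic)
          phi (z + ((r * cos t)%R +i* (r * sin t)%R))%R)%E.

Definition ofR2 (xy : R * R) : C := xy.1 +i* xy.2.

Definition lambda2 := (@lebesgue_measure R \x @lebesgue_measure R)%E.

Definition weighted_L2 (phi : C -> \bar R) (Om : set C) (f : C -> C) : \bar R :=
  (\int[lambda2]_(xy in ofR2 @^-1` Om)
     ((normc (f (ofR2 xy)) ^+ 2)%R%:E * expeR (- phi (ofR2 xy))))%E.

End Defs.

(* Main.v *)
Require Import Defs.
From HB Require Import structures.
From mathcomp Require Import all_boot all_order all_algebra.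
From mathcomp Require Import all_classical all_reals all_analysis.
From mathcomp Require Import complex.
From mathcomp Require Import measurable_realfun lra ring.
Import Order.TTheory GRing.Theory Num.Theory numFieldNormedType.Exports.
Import ComplexField Normc.
Local Open Scope classical_set_scope.
Local Open Scope ring_scope.

Lemma measurable_inv (R : realType) : measurable_fun setT (@GRing.inv R).
Proof.
rewrite -(setUv [set (0:R)]) setUC.
apply/measurable_funU => //.
  exact: measurableC.
split; last exact: measurable_fun_set1.
apply: open_continuous_measurable_fun.
  apply: closed_openC; apply: accessible_closed_set1; apply: hausdorff_accessible; exact: Rhausdorff.
move=> x /set_mem /= x0; apply: inv_continuous; exact/eqP.
Qed.

Section Key.
Import HBNNSimple.
Context d (T : measurableType d) (R : realType) (mu : {measure set T -> \bar R}).
Local Open Scope ereal_scope.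

Lemma nnint_le (f g : T -> \bar R) : (forall x, 0 <= f x) -> (forall x, f x <= g x) ->
  \int[mu]_x f x <= \int[mu]_x g x.
Proof.
move=> f0 fg; have g0 x : 0 <= g x := le_trans (f0 x) (fg x).
rewrite !ge0_integralTE //; apply: ge_ereal_sup => _ [h hf <-].
apply: ereal_sup_ubound; exists h => // x; exact: le_trans (hf x) (fg x).
Qed.

Lemma key (G : T -> \bar R) (k : T -> R) :
  (forall x, 0 <= G x) -> \int[mu]_x G x < +oo ->
  measurable_fun setT k ->
  (forall x, G x != 0 -> (1 < k x)%R) ->
  forall e : R, (0 < e)%R -> exists N : nat,
    \int[mu]_x (((k x ^+ N)^-1)%:E * G x) < e%:E.
Proof.
move=> G0 Gfin mk kG e e0.
set I := \int[mu]_x G x.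
have I0 : 0 <= I by apply: integral_ge0 => ? _.
have Ifin : I \is a fin_num by rewrite ge0_fin_numE.
set del := (e / 3)%R.
have del0 : (0 < del)%R by rewrite divr_gt0.
have [s0 s0G Is0] : exists2 s0 : {nnsfun T >-> R},
    (forall x, (s0 x)%:E <= G x) & I - del%:E < sintegral mu s0.
  have : I - del%:E < I by rewrite lteBlDr // lteDl // lte_fin.
  rewrite {2}/I ge0_integralTE// => /ereal_sup_gt [_ [s0 s0G <-]] h.
  by exists s0.
have s0ge0 x : (0 <= s0 x)%R := fun_ge0 x.
have s0fin : sintegral mu s0 \is a fin_num.
  rewrite ge0_fin_numE ?sintegral_ge0 //; apply: le_lt_trans Gfin.
  rewrite /I ge0_integralTE//; apply: ereal_sup_ubound; by exists s0.
pose g n x := ((k x ^+ n)^-1)%R.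
have mg n : measurable_fun setT (g n).
  exact: (measurableT_comp (@measurable_inv R) (measurable_funX n mk)).
have ms0 : measurable_fun setT s0 := @measurable_funPT _ _ _ _ s0.
have s0k x : s0 x != 0%R -> (1 < k x)%R.
  move=> h; apply: kG; rewrite gt_eqF //; apply: lt_le_trans (s0G x).
  by rewrite lte_fin lt_def h s0ge0.
have g01 n x : (1 < k x)%R -> (0 < g n x <= 1)%R.
  move=> k1; have k0 : (0 < k x)%R by apply: lt_trans k1.
  rewrite /g invr_gt0 exprn_gt0 //= invr_le1 ?exprn_gt0 ?unitfE ?expf_neq0 ?gt_eqF //.
  by rewrite exprn_ege1 // ltW.
have mf n : measurable_fun setT (fun x => (s0 x * g n x)%:E).
  by apply/measurable_EFinP; apply: measurable_funM.
have cvpt : \forall x \ae mu, setT x ->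
    ((fun n => (s0 x * g n x)%:E) n @[n --> \oo] --> (cst 0 x))%classic.
  apply: aeW => x _ /=.
  have [->|h] := eqVneq (s0 x) 0%R.
    under eq_fun do rewrite mul0r. exact: cvg_cst.
  apply: cvg_EFin; first exact: nearW.
  rewrite -(mulr0 (s0 x)); apply: cvgMl_tmp.
  have k1 := s0k x h; have k0 : (0 < k x)%R by apply: lt_trans k1.
  have -> : g ^~ x = GRing.exp (k x)^-1.
    by apply/funext => n; rewrite /g exprVn.
  apply: cvg_expr; rewrite ger0_norm ?invr_ge0 ?ltW// invr_lt1 ?unitfE ?gt_eqF//.
have is0 : mu.-integrable setT (fun x => (s0 x)%:E).
  apply/integrableP; split; first exact/measurable_EFinP.
  under eq_integral do rewrite gee0_abs ?lee_fin//.
  rewrite integralT_nnsfun; apply: le_lt_trans Gfin.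
  rewrite /I ge0_integralTE//; apply: ereal_sup_ubound; by exists s0.
have bnd : \forall x \ae mu, forall n, setT x -> `|(s0 x * g n x)%:E| <= (s0 x)%:E.
  apply: aeW => x n _; rewrite abse_EFin lee_fin normrM ger0_norm//.
  have [->|h] := eqVneq (s0 x) 0%R; first by rewrite mul0r.
  have /andP[g0 g1] := g01 n x (s0k x h).
  by rewrite (ger0_norm (ltW g0)) ger_pMr // lt_def h s0ge0.
have [_ _ cvgI] := dominated_convergence measurableT mf (measurable_cst _) cvpt is0 bnd.
rewrite integral0 in cvgI.
have /fine_cvgP [finN cvgf] := cvgI.
have := filterI finN (@cvgr_lt _ _ _ _ _ 0%R cvgf del del0).
move=> [N0 _ /(_ N0 (leqnn _)) [/= finN0 ltN0]].
exists N0.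
have If : \int[mu]_x (s0 x * g N0 x)%:E < del%:E.
  by move: finN0 ltN0 => /=; move=> /fineK <-; rewrite lte_fin.
pose K x := (k x ^+ N0)%R.
have gK x : g N0 x = ((K x)^-1)%R by [].
have H0 x : 0 <= ((k x ^+ N0)^-1)%:E * G x.
  have [->|Gx] := eqVneq (G x) 0; first by rewrite mule0.
  have /andP[g0 _] := g01 N0 x (kG x Gx).
  by rewrite mule_ge0 // lee_fin ltW.
rewrite ge0_integralTE //.
apply: (@le_lt_trans _ _ (del + del)%:E); last by rewrite lte_fin /del; lra.
apply: ge_ereal_sup => _ [s sG <-].
have sge0 x : (0 <= s x)%R := fun_ge0 x.
have ms : measurable_fun setT s := measurable_funPT s.
pose m x := (Num.max (s0 x) (s x * K x))%R.
have Gz x : G x = 0 -> s x = 0%R /\ s0 x = 0%R.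
  move=> Gx; have := sG x; rewrite Gx mule0 lee_fin => sx.
  have := s0G x; rewrite Gx lee_fin => s0x.
  by split; apply/eqP; rewrite eq_le ?sx ?s0x ?sge0 ?s0ge0.
have P1 x : (m x)%:E <= G x.
  rewrite /m; have [Gx|Gx] := eqVneq (G x) 0.
    by have [-> ->] := Gz x Gx; rewrite mul0r maxxx Gx.
  have k1 := kG x Gx; have /andP[g0 g1] := g01 N0 x k1.
  have Kp : (0 < K x)%R by rewrite /K exprn_gt0 // (lt_trans _ k1).
  rewrite EFin_max ge_max s0G /=.
  move: (sG x) (G0 x); case: (G x) => [r| |] //=; rewrite ?leey // !lee_fin => sr r0.
  by rewrite -ler_pdivlMr // mulrC.
have P2 x : (s x <= s0 x * g N0 x + (m x - s0 x))%R.
  rewrite /m; have [Gx|Gx] := eqVneq (G x) 0.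
    by have [-> ->] := Gz x Gx; rewrite !mul0r maxxx subrr addr0.
  have k1 := kG x Gx; have /andP[g0 g1] := g01 N0 x k1.
  have Kp : (0 < K x)%R by rewrite /K exprn_gt0 // (lt_trans _ k1).
  have gKe : (g N0 x * K x = 1)%R by rewrite gK mulVf // gt_eqF.
  have := sge0 x; have := s0ge0 x.
  have [h|h] := leP (s0 x) (s x * K x)%R.
    move=> ? ?; nra.
  move=> ? ?; nra.
have mK : measurable_fun setT K := measurable_funX N0 mk.
have mm : measurable_fun setT m := measurable_maxr ms0 (measurable_funM ms mK).
have mge x : (0 <= m x - s0 x)%R by rewrite subr_ge0 le_max lexx.
have f1ge x : (0 <= s0 x * g N0 x)%R.
  have [->|h] := eqVneq (s0 x) 0%R; first by rewrite mul0r.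
  have /andP[g0 _] := g01 N0 x (s0k x h).
  by rewrite mulr_ge0 // ltW.
have hsum : \int[mu]_x (s x)%:E <=
    \int[mu]_x (s0 x * g N0 x)%:E + \int[mu]_x (m x - s0 x)%:E.
  rewrite -ge0_integralD //; try (by move=> x _; rewrite lee_fin);
    try (by apply/measurable_EFinP; first [exact: measurable_funM | exact: measurable_funB | done]).
  apply: ge0_le_integral => //.
  - by move=> x _; rewrite lee_fin.
  - exact/measurable_EFinP.
  - apply: emeasurable_funD; apply/measurable_EFinP.
      exact: measurable_funM.
    exact: measurable_funB.
  - by move=> x _; rewrite -EFinD lee_fin.
have hm : \int[mu]_x (m x)%:E = \int[mu]_x (s0 x)%:E + \int[mu]_x (m x - s0 x)%:E.
  rewrite -ge0_integralD //; try (by move=> x _; rewrite lee_fin);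
    try (by apply/measurable_EFinP; first [exact: measurable_funM | exact: measurable_funB | done]).
  by apply: eq_integral => x _; rewrite -EFinD addrC subrK.
have hmI : \int[mu]_x (m x)%:E <= I.
  apply: nnint_le => x; last exact: P1.
  by rewrite lee_fin (le_trans (s0ge0 x)) // le_max lexx.
rewrite integralT_nnsfun in hm.
have Xlt : \int[mu]_x (m x - s0 x)%:E < del%:E.
  rewrite -(lteD2lE _ _ s0fin) -hm; apply: le_lt_trans hmI _.
  by rewrite -lteBlDr.
rewrite -integralT_nnsfun; apply: le_trans hsum _.
by rewrite EFinD; apply: leeD; apply: ltW.
Qed.
End Key.

Section Geo.
Variable R : realType.
Notation C := (R[i])^o.
Local Open Scope complex_scope.

Lemma ball_normc (x : C) (e : R) (y : C) : ball x e%:C y <-> normc (x - y) < e.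
Proof. by rewrite -ball_normE /ball_ /= ltcR. Qed.

Lemma nbhs_normc {x : C} {A : set C} : nbhs x A ->
  exists2 e : R, 0 < e & forall y : C, normc (x - y) < e -> A y.
Proof.
move=> /nbhs_ballP [e e0 eA].
have /andP[/eqP ime re0] : (complex.Im e == complex.Im 0) && (complex.Re 0 < complex.Re e).
  by rewrite -ltcE; exact: e0.
exists (complex.Re e) => // y hy; apply: eA.
have -> : e = (complex.Re e)%:C by case: e ime {e0 re0 hy} => a b /= ->.
exact/ball_normc.
Qed.

Lemma normc_nbhs (x : C) (e : R) : 0 < e -> nbhs x (fun y : C => normc (x - y) < e).
Proof.
move=> e0; apply/nbhs_ballP; exists e%:C; first by have h := ltcR 0 e; rewrite e0 in h; exact: h.
by move=> y /ball_normc.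
Qed.

Lemma closure_normc {A : set C} {x : C} : closure A x ->
  forall e : R, 0 < e -> exists y, A y /\ normc (x - y) < e.
Proof.
move=> cl e e0; have [y [Ay hy]] := cl _ (@normc_nbhs x e e0).
by exists y.
Qed.

Lemma normc_real (a : R) : 0 <= a -> normc (a%:C) = a.
Proof. by move=> a0; rewrite /normc /= expr0n /= addr0 sqrtr_sqr ger0_norm. Qed.

Lemma normc_ge0 (x : C) : 0 <= normc x.
Proof. by case: x => a b; rewrite /normc sqrtr_ge0. Qed.

Lemma normcB (x y : C) : normc (x - y) = normc (y - x).
Proof. by rewrite -normcN opprB. Qed.

Lemma normcX (x : C) n : normc (x ^+ n) = normc x ^+ n.
Proof.
elim: n => [|n ih]; first by rewrite !expr0 normc1.
by rewrite !exprS normcM ih.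
Qed.

Lemma normc_scale (a : R) (x : C) : 0 <= a -> normc (a%:C * x) = a * normc x.
Proof. by move=> a0; rewrite normcM normc_real. Qed.

Lemma om_far (Om : set C) (c : C) (r : R) (z : C) : 0 < r -> open Om ->
  disc c r `<=` ~` Om -> Om z -> r < normc (z - c).
Proof.
move=> r0 oOm dOm Omz; rewrite ltNge; apply/negP => zr.
have [e e0 eOm] := nbhs_normc (oOm z Omz : nbhs z Om).
set d := normc (z - c) in zr.
have [d0|dn0] := eqVneq d 0.
  have zc : z = c by apply/eqP; rewrite -subr_eq0; apply/eqP/eq0_normc.
  by apply: (dOm z) => //; rewrite /disc /= zc subrr normc0.
have dp : 0 < d by rewrite lt_def dn0 normc_ge0.
pose t := Num.min (1/2) (e / (2 * d)).
have t0 : 0 < t.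
  rewrite lt_min; apply/andP; split; first lra.
  by apply: divr_gt0 => //; apply: mulr_gt0.
have t1 : t <= 1/2 by rewrite ge_min lexx.
have t2 : t <= e / (2 * d) by rewrite ge_min lexx orbT.
pose y := z - t%:C * (z - c).
apply: (dOm y).
  rewrite /disc /=.
  have -> : y - c = (1 - t)%:C * (z - c).
    by rewrite /y rmorphB /= rmorph1; ring.
  rewrite normc_scale; last by lra.
  rewrite -/d; nra.
apply: eOm.
have -> : z - y = t%:C * (z - c) by rewrite /y; ring.
rewrite normc_scale ?ltW // -/d.
have : t * d <= e / (2 * d) * d by rewrite ler_pM2r.
have -> : e / (2 * d) * d = e / 2 by field; rewrite dn0.
move=> h; apply: le_lt_trans h _; lra.
Qed.

Lemma bd_disc (c : C) (r : R) (p : C) : 0 < r -> boundary (disc c r) p ->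
  p != c /\ normc (p - c) <= r.
Proof.
move=> r0 [cl1 cl2]; split.
  apply/eqP => pc; have [y [ny hy]] := closure_normc cl2 _ r0.
  by apply: ny; rewrite /disc /= normcB -pc.
rewrite leNgt; apply/negP => rp.
have dp : 0 < normc (p - c) - r by rewrite subr_gt0.
have [y [dy hy]] := closure_normc cl1 _ dp.
move: dy; rewrite /disc /= => dy.
have := le_normcD (p - y) (y - c).
rewrite (_ : p - y + (y - c) = p - c); last by ring.
lra.
Qed.

Lemma c_notin_closure (Om : set C) (c : C) (r : R) : 0 < r ->
  disc c r `<=` ~` Om -> ~ closure Om c.
Proof.
move=> r0 dOm cl; have [y [Omy hy]] := closure_normc cl _ r0.
by apply: (dOm y) => //; rewrite /disc /= normcB.
Qed.
End Geo.

Section Hol.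
Variable R : realType.
Notation C := (R[i])^o.

Lemma derivable_hornerC (P : {poly R[i]}) (z : C) :
  derivable (fun x : C => P.[x] : C) z 1.
Proof.
elim/poly_ind: P => [|P a ih].
  have -> : (fun x : C => (0 : {poly R[i]}).[x] : C) = cst 0.
    by apply/funext => x; rewrite horner0.
  exact: derivable_cst.
have -> : (fun x : C => (P * 'X + a%:P).[x] : C) =
    ((fun x : C => P.[x] : C) * (fun x : C => x)) + (fun _ : C => a : C).
  by apply/funext => x; rewrite !hornerE.
apply: (@derivableD _ C C).
  apply: (@derivableM _ C). exact: ih. exact: (@derivable_id _ C).
exact: derivable_cst.
Qed.

Lemma derivable_Pt (P : {poly R[i]}) (w c : C) (N : nat) (z : C) : z != c ->
  derivable (fun x : C => P.[x] * (1 - (w / (x - c)) ^+ N) : C) z 1.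
Proof.
move=> zc.
have -> : (fun x : C => P.[x] * (1 - (w / (x - c)) ^+ N) : C) =
  (fun x : C => P.[x] : C) * ((fun _ : C => 1 : C) -
      ((fun _ : C => w : C) * (fun x : C => (x - c)^-1 : C)) ^+ N).
  by apply/funext => x /=; rewrite !fctE.
apply: (@derivableM _ C); first exact: derivable_hornerC.
apply: (@derivableB _ C C); first exact: derivable_cst.
apply: (@derivableX _ C); apply: (@derivableM _ C); first exact: derivable_cst.
apply: (@derivableV _ C); first by rewrite subr_eq0.
apply: (@derivableB _ C C); [exact: (@derivable_id _ C) | exact: derivable_cst].
Qed.
End Hol.


Theorem theorem4p4 (R : realType) (Om : set (R[i])^o) (phi : (R[i])^o -> \bar R)
  (P : {poly R[i]}) (p c : (R[i])^o) (r : R) :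
  caratheodory_domain Om ->
  subharmonic phi ->
  (weighted_L2 phi Om (fun z => P.[z]) < +oo)%E ->
  boundary Om p ->
  0 < r -> disc c r `<=` ~` Om -> boundary (disc c r) p ->
  forall eps : R, 0 < eps ->
  exists (U : set (R[i])^o) (Pt : (R[i])^o -> (R[i])^o),
    open U /\ closure Om `<=` U /\ holomorphic_on U Pt /\
    Pt p = 0 /\
    (weighted_L2 phi Om (fun z => (Pt z - P.[z])%R) < eps%:E)%E.
Proof.
move=> [[_ [oOm _]] _] _ hfin pbd r0 dOm bdisc eps eps0.
have [pc pr] := @bd_disc R c r p r0 bdisc.
pose w := p - c.
have w0 : w != 0 by rewrite subr_eq0.
have nw0 : 0 < normc w.
  rewrite lt_def (@normc_ge0 R) andbT; apply/eqP => /eq0_normc /eqP; exact/negP.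
pose D := (@ofR2 R) @^-1` Om.
pose F xy := ((normc (P.[@ofR2 R xy]) ^+ 2)%:E * expeR (- phi (@ofR2 R xy)))%E.
pose G := F \_ D.
pose k (xy : R * R) := ((xy.1 - complex.Re c) ^+ 2 + (xy.2 - complex.Im c) ^+ 2) / normc w ^+ 2.
have nk xy : normc (@ofR2 R xy - c) ^+ 2 = (xy.1 - complex.Re c) ^+ 2 + (xy.2 - complex.Im c) ^+ 2.
  case: c {pc pr w w0 nw0 dOm bdisc D F G k} => a b; case: xy => x y.
  have -> : @ofR2 R (x, y) - (a +i* b)%C = ((x - a) +i* (y - b))%C by [].
  by rewrite /normc sqr_sqrtr // addr_ge0 // sqr_ge0.
have G0 xy : (0 <= G xy)%E.
  rewrite /G /patch; case: ifPn => // _.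
  by rewrite /F mule_ge0 // ?lee_fin ?sqr_ge0 // expeR_ge0.
have Gfin : (\int[(@lebesgue_measure R \x @lebesgue_measure R)%E]_x G x < +oo)%E.
  suff -> : (\int[(@lebesgue_measure R \x @lebesgue_measure R)%E]_x G x = weighted_L2 phi Om (fun z => P.[z]))%E by [].
  by rewrite /weighted_L2 [in RHS]integral_mkcond.
have kG xy : G xy != 0%E -> 1 < k xy.
  rewrite /G /patch; case: ifPn => [xyD _|_ /eqP //].
  have Omz : Om (@ofR2 R xy) by move: xyD; rewrite inE.
  have := @om_far R Om c r _ r0 oOm dOm Omz.
  rewrite /k ltr_pdivlMr ?exprn_gt0 // mul1r -nk => h.
  have := @normc_ge0 R w; rewrite /w => hw.
  nra.
have [N HN] := @key _ _ R (@lebesgue_measure R \x @lebesgue_measure R)%E G k G0 Gfin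
  ltac:(apply: measurable_funM => //; apply: measurable_funD; apply: measurable_funX;
        apply: measurable_funB => //) kG eps eps0.
exists (~` [set c]), (fun z => P.[z] * (1 - (w / (z - c)) ^+ N)).
have oU : open (~` [set c]).
  apply: closed_openC; apply: accessible_closed_set1; apply: hausdorff_accessible.
  exact: norm_hausdorff.
split; first exact: oU.
split.
  move=> z clz zc; apply: (@c_notin_closure R Om c r r0 dOm); by rewrite -zc.
split.
  split; first exact: oU.
  by move=> z zc; apply: derivable_Pt; apply/eqP; exact: zc.
split; first by rewrite /= divff // expr1n subrr mulr0.
rewrite /weighted_L2 integral_mkcond; apply: le_lt_trans HN.
rewrite le_eqVlt; apply/orP; left; apply/eqP.
congr integral; apply/funext => xy.
rewrite /G /patch; case: ifPn => xyD; last by rewrite mule0.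
have Omz : Om (@ofR2 R xy) by move: xyD; rewrite inE.
have h := @om_far R Om c r _ r0 oOm dOm Omz.
set z := @ofR2 R xy in Omz h *.
have nz0 : 0 < normc (z - c) by apply: lt_trans h.
rewrite /F -/z muleA -EFinM; congr (_%:E * _)%E.
have -> : P.[z] * (1 - (w / (z - c)) ^+ N) - P.[z] = - (P.[z] * (w / (z - c)) ^+ N).
  by ring.
rewrite normcN normcM normcX normcM normcV /k -nk -/z.
have -> : normc (z - c) ^+ 2 / normc w ^+ 2 = ((normc w / normc (z - c)) ^+ 2)^-1.
  by rewrite expr_div_n invf_div.
rewrite exprVn invrK exprMn -!exprM mulnC mulrC.
done.
Qed.
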